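(* Let $F=\langle f_1,\ldots,f_k\rangle$ be a normalized solution to an instance $(\mathcal{T}_{initial},\mathcal{T}_{final},k)$ of Flip Distance, and let $C$ be a component of $\mathcal{D}_F$. Let $f_i$ and $f_h$, with $i<h$, be two flips in $C$. If one of the following conditions holds, then there is a directed path from $f_i$ to $f_h$ in $C$: (1) $\phi(f_h)$ crosses $\epsilon(f_i)$; (2) $\phi(f_h)=\epsilon(f_i)$; (3) $\epsilon(f_i)=\epsilon(f_h)$; (4) $\phi(f_i)=\epsilon(f_h)$, or $\phi(f_i)$ and $\epsilon(f_h)$ share a triangle $T$ in $\mathcal{T}_j$ for some $j$ with $i\le j<h$.
   Context: A triangulation of a finite point set $\mathcal{P}$ in the plane is a partition of the convex hull of $\mathcal{P}$ into triangles whose vertex set is $\mathcal{P}$. For an interior edge $e$ of a triangulation $\mathcal{T}$, the quadrilateral associated with $e$ is the union of the two triangles of $\mathcal{T}$ sharing $e$. A flip $f$ with underlying edge $\epsilon(f)=e$ is admissible in $\mathcal{T}$ if $e\in\mathcal{T}$ and its associated quadrilateral is convex; performing it replaces $e$ by the other diagonal $\phi(f)$ of that quadrilateral. Two distinct edges share a triangle in $\mathcal{T}$ if they are edges of the same triangle of $\mathcal{T}$; two edges between points of $\mathcal{P}$ cross if they intersect in their interiors. A sequence $F=\langle f_1,\ldots,f_r\rangle$ is valid with respect to $\mathcal{T}$ if there are triangulations $\mathcal{T}_0=\mathcal{T},\mathcal{T}_1,\ldots,\mathcal{T}_r$ such that $f_i$ is admissible in $\mathcal{T}_{i-1}$ and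 performing it yields $\mathcal{T}_i$; then we write $\mathcal{T}\xrightarrow{F}\mathcal{T}_r$. Flips in a sequence are distinct objects even if they have the same underlying edge. For $1\le i<j\le r$, flip $f_j$ is adjacent to $f_i$ (written $f_i\to f_j$) if (1) either $\phi(f_i)=\epsilon(f_j)$ or $\phi(f_i)$ and $\epsilon(f_j)$ share a triangle in $\mathcal{T}_{j-1}$, and (2) there is no $p$ with $i<p<j$ and $\epsilon(f_p)=\phi(f_i)$. $\mathcal{D}_F$ is the directed acyclic graph whose nodes are the flips of $F$ and whose arcs are the pairs $f_i\to f_j$; a component of it is a weakly connected component. The flip distance between two triangulations is the minimum length of a valid sequence transforming one into the other. An instance $(\mathcal{T}_{initial},\mathcal{T}_{final},k)$ of Flip Distance consists of two triangulations of $\mathcal{P}$ and $k\in\mathbb{N}$; a solution is a valid sequence $F$ of length $k$ with $\mathcal{T}_{initial}\xrightarrow{F}\mathcal{T}_{final}$, where $k$ is the flip distance between them. For a solution $F=\langle f_1,\ldots,f_k\rangle$, $\mathcal{T}_j$ denotes the outcome of applying $\langle f_1,\ldots,f_j\rangle$ to $\mathcal{T}_{initial}$. A changed edge is an edge of $\mathcal{T}_{initial}$ not in $\mathcal{T}_{final}$; a component of $\mathcal{D}_F$ is essential if it contains a flip whose underlying edge is a changed edge. A solution $F$ is normalized if every component of $\mathcal{D}_F$ is essential and the flips of each component of $\mathcal{D}_F$ appear as a consecutive block in $F$. *)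

(* Defs.v *)
(* Points in the plane are row vectors 'rV[R]_2 over an
   arbitrary real field R; the point set P is given by an injective
   indexing pt : 'I_n -> 'rV[R]_2.  Edges are 2-element subsets of 'I_n,
   triangles are 3-element subsets of 'I_n, a triangulation is a set of
   triangles. *)
From HB Require Import structures.
From mathcomp Require Import all_boot all_order all_algebra.
From Stdlib Require Import Relations.Relation_Operators.
Set Implicit Arguments. Unset Strict Implicit. Unset Printing Implicit Defensive.
Import Order.TTheory GRing.Theory Num.Theory.
Local Open Scope ring_scope.

Section FlipDefs.
Variables (R : realFieldType) (n : nat) (pt : 'I_n -> 'rV[R]_2).

Definition xco (p : 'rV[R]_2) : R := p ord0 ord0.
Definition yco (p : 'rV[R]_2) : R := p ord0 (inord 1).

Definition orient (a b c : 'rV[R]_2) : R :=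
  (xco b - xco a) * (yco c - yco a) - (yco b - yco a) * (xco c - xco a).

Definition in_conv (S : {set 'I_n}) (x : 'rV[R]_2) : Prop :=
  exists lam : 'I_n -> R,
    (forall i, 0 <= lam i) /\ (forall i, i \notin S -> lam i = 0) /\
    \sum_i lam i = 1 /\ x = \sum_i lam i *: pt i.

(* x is a convex combination with strictly positive weights on S
   (for a non-degenerate triangle S: x lies in the open interior of S) *)
Definition in_open_conv (S : {set 'I_n}) (x : 'rV[R]_2) : Prop :=
  exists lam : 'I_n -> R,
    (forall i, i \in S -> 0 < lam i) /\ (forall i, i \notin S -> lam i = 0) /\
    \sum_i lam i = 1 /\ x = \sum_i lam i *: pt i.

Definition is_edge (e : {set 'I_n}) : Prop := #|e| = 2%N.

Definition nondeg_triangle (t : {set 'I_n}) : Prop :=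
  exists a b c, t = [set a; b; c] /\ orient (pt a) (pt b) (pt c) != 0.

(* A triangulation of P: a partition of conv(P) into (non-degenerate)
   triangles with vertices in P, whose vertex set is P. *)
Definition triangulation (T : {set {set 'I_n}}) : Prop :=
  [/\ (forall t, t \in T -> nondeg_triangle t),
      (forall t1 t2, t1 \in T -> t2 \in T -> t1 != t2 ->
         forall x, ~ (in_open_conv t1 x /\ in_open_conv t2 x)),
      (forall x, in_conv setT x <-> exists2 t, t \in T & in_conv t x),
      (forall i, exists2 t, t \in T & i \in t) &
      (forall t i, t \in T -> in_conv t (pt i) -> i \in t)].

Definition edge_of (T : {set {set 'I_n}}) (e : {set 'I_n}) : Prop :=
  is_edge e /\ exists2 t, t \in T & e \subset t.

Definition share_tri (T : {set {set 'I_n}}) (e1 e2 : {set 'I_n}) : Prop :=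
  [/\ is_edge e1, is_edge e2, e1 != e2 &
      exists2 t, t \in T & (e1 \subset t) && (e2 \subset t)].

Definition open_seg (p q x : 'rV[R]_2) : Prop :=
  exists s : R, 0 < s < 1 /\ x = (1 - s) *: p + s *: q.

Definition crosses (e1 e2 : {set 'I_n}) : Prop :=
  e1 != e2 /\
  exists a b c d, [/\ a != b, c != d, e1 = [set a; b], e2 = [set c; d] &
    exists x, open_seg (pt a) (pt b) x /\ open_seg (pt c) (pt d) x].

Definition union_convex (t1 t2 : {set 'I_n}) : Prop :=
  forall x y, (in_conv t1 x \/ in_conv t2 x) -> (in_conv t1 y \/ in_conv t2 y) ->
  forall s : R, 0 <= s <= 1 ->
    in_conv t1 ((1 - s) *: x + s *: y) \/ in_conv t2 ((1 - s) *: x + s *: y).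

(* flipping the edge e of T (admissible: e is an interior edge of T whose
   quadrilateral is convex) yields the edge e' and the triangulation T' *)
Definition flip_step (T : {set {set 'I_n}}) (e e' : {set 'I_n})
    (T' : {set {set 'I_n}}) : Prop :=
  exists a b c d : 'I_n,
    [/\ uniq [:: a; b; c; d], e = [set a; b],
        ([set a; b; c] \in T) && ([set a; b; d] \in T),
        union_convex [set a; b; c] [set a; b; d] /\ e' = [set c; d] &
        T' = ((T :\ [set a; b; c]) :\ [set a; b; d]) :|:
             [set [set a; c; d]; [set b; c; d]]].

(* A valid sequence <f_1,...,f_k> w.r.t. T0: eps i = epsilon(f_i),
   phi i = phi(f_i), Ts j = T_j (outcome of the first j flips). *)
Definition valid_run (T0 : {set {set 'I_n}}) (k : nat) (eps phi : nat -> {set 'I_n})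
    (Ts : nat -> {set {set 'I_n}}) : Prop :=
  [/\ Ts 0%N = T0,
      (forall j, (j <= k)%N -> triangulation (Ts j)) &
      (forall i, (1 <= i <= k)%N -> flip_step (Ts i.-1) (eps i) (phi i) (Ts i))].

(* a solution of the instance (Ti, Tf, k) of Flip Distance: a valid sequence
   of length k from Ti to Tf, with k equal to the flip distance *)
Definition solution (Ti Tf : {set {set 'I_n}}) (k : nat) (eps phi : nat -> {set 'I_n})
    (Ts : nat -> {set {set 'I_n}}) : Prop :=
  [/\ valid_run Ti k eps phi Ts, Ts k = Tf &
      forall k' eps' phi' Ts', valid_run Ti k' eps' phi' Ts' -> Ts' k' = Tf ->
        (k <= k')%N].

Section DAG.
Variables (k : nat) (eps phi : nat -> {set 'I_n}) (Ts : nat -> {set {set 'I_n}}).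

Definition adj (i j : nat) : Prop :=
  [/\ (1 <= i)%N, (i < j)%N, (j <= k)%N,
      phi i = eps j \/ share_tri (Ts j.-1) (phi i) (eps j) &
      forall p, (i < p < j)%N -> eps p <> phi i].

Definition wconn : nat -> nat -> Prop := clos_refl_sym_trans nat adj.

Definition dpath : nat -> nat -> Prop := clos_trans nat adj.

Definition is_component (C : nat -> Prop) : Prop :=
  exists j, (1 <= j <= k)%N /\ forall x, C x <-> ((1 <= x <= k)%N /\ wconn j x).

End DAG.

Definition normalized_solution (Ti Tf : {set {set 'I_n}}) (k : nat)
    (eps phi : nat -> {set 'I_n}) (Ts : nat -> {set {set 'I_n}}) : Prop :=
  [/\ solution Ti Tf k eps phi Ts,
      (forall C, is_component k eps phi Ts C ->
         exists x, [/\ C x, edge_of Ti (eps x) & ~ edge_of Tf (eps x)]) &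
      (forall C, is_component k eps phi Ts C ->
         forall i p h, C i -> C h -> (i < p < h)%N -> C p)].

End FlipDefs.

(* Main.v *)
Require Import Defs.
From HB Require Import structures.
From mathcomp Require Import all_boot all_order all_algebra.
From mathcomp Require Import ring lra.
From Stdlib Require Import Relations.Relation_Operators.
Set Implicit Arguments. Unset Strict Implicit. Unset Printing Implicit Defensive.
Import Order.TTheory GRing.Theory Num.Theory.
Local Open Scope ring_scope.

Section Geo.
Variable R : realFieldType.
Implicit Types (u v w p q : 'rV[R]_2).

Lemma xcoD u v : xco (u + v) = xco u + xco v. Proof. by rewrite /xco !mxE. Qed.
Lemma ycoD u v : yco (u + v) = yco u + yco v. Proof. by rewrite /yco !mxE. Qed.
Lemma xcoZ a u : xco (a *: u) = a * xco u. Proof. by rewrite /xco !mxE. Qed.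
Lemma ycoZ a u : yco (a *: u) = a * yco u. Proof. by rewrite /yco !mxE. Qed.
Lemma xcoN u : xco (- u) = - xco u. Proof. by rewrite /xco !mxE. Qed.
Lemma ycoN u : yco (- u) = - yco u. Proof. by rewrite /yco !mxE. Qed.
Lemma xco0 : xco (0 : 'rV[R]_2) = 0. Proof. by rewrite /xco !mxE. Qed.
Lemma yco0 : yco (0 : 'rV[R]_2) = 0. Proof. by rewrite /yco !mxE. Qed.

Definition coE := (xcoD, ycoD, xcoZ, ycoZ, xcoN, ycoN, xco0, yco0).

Lemma vec_eq u v : xco u = xco v -> yco u = yco v -> u = v.
Proof.
move=> hx hy; apply/rowP => j.
have [->|->] : j = ord0 \/ j = inord 1.
  case: j => [[|[|m]] Hj]; [left|right|by []]; apply/val_inj => //=.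
  by rewrite inordK.
- exact: hx.
- exact: hy.
Qed.

Lemma orient_rot p q w : orient p q w = orient q w p.
Proof. rewrite /orient; ring. Qed.
Lemma orient_swap p q w : orient p q w = - orient q p w.
Proof. rewrite /orient; ring. Qed.

Lemma cramer p q w y :
  orient p q w *: y = orient y q w *: p + orient p y w *: q + orient p q y *: w.
Proof. by apply: vec_eq; rewrite !coE /orient; ring. Qed.

End Geo.

Section Pts.
Variables (R : realFieldType) (n : nat) (pt : 'I_n -> 'rV[R]_2).

Definition lam3 (a b c : 'I_n) (la lb lc : R) (i : 'I_n) : R :=
  (if i == a then la else 0) + (if i == b then lb else 0) + (if i == c then lc else 0).

Lemma sum_if (a : 'I_n) (F : R) : \sum_i (if i == a then F else 0) = F.
Proof. by rewrite (bigD1 a) //= eqxx big1 ?addr0 // => i /negbTE ->. Qed.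

Lemma sumZ_if (a : 'I_n) (F : R) :
  \sum_i ((if i == a then F else 0) *: pt i) = F *: pt a.
Proof. by rewrite (bigD1 a) //= eqxx big1 ?addr0 // => i /negbTE ->; rewrite scale0r. Qed.

Lemma lam3_sum a b c la lb lc : \sum_i lam3 a b c la lb lc i = la + lb + lc.
Proof. by rewrite /lam3 !big_split /= !sum_if. Qed.

Lemma lam3_sumZ a b c la lb lc :
  \sum_i lam3 a b c la lb lc i *: pt i = la *: pt a + lb *: pt b + lc *: pt c.
Proof.
rewrite /lam3; under eq_bigr => i _ do rewrite !scalerDl.
by rewrite !big_split /= !sumZ_if.
Qed.

Lemma in_conv3 a b c la lb lc :
  0 <= la -> 0 <= lb -> 0 <= lc -> la + lb + lc = 1 ->
  in_conv pt [set a; b; c] (la *: pt a + lb *: pt b + lc *: pt c).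
Proof.
move=> ha hb hc hs; exists (lam3 a b c la lb lc); split; last split; last split.
- by move=> i; rewrite /lam3; case: (i == a); case: (i == b); case: (i == c);
     rewrite ?addr0 ?add0r ?addr_ge0.
- move=> i; rewrite !inE /lam3.
  by case: (i == a); case: (i == b); case: (i == c) => //= _; rewrite !addr0.
- by rewrite lam3_sum.
- by rewrite lam3_sumZ.
Qed.

Lemma in_open_conv3 a b c la lb lc :
  a != b -> a != c -> b != c ->
  0 < la -> 0 < lb -> 0 < lc -> la + lb + lc = 1 ->
  in_open_conv pt [set a; b; c] (la *: pt a + lb *: pt b + lc *: pt c).
Proof.
move=> nab nac nbc ha hb hc hs; exists (lam3 a b c la lb lc); split; last split; last split.
- move=> i; rewrite !inE /lam3 -orbA => /orP [/eqP->|/orP [/eqP->|/eqP->]].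
  + by rewrite eqxx (negbTE nab) (negbTE nac) !addr0.
  + by rewrite eqxx eq_sym (negbTE nab) (negbTE nbc) add0r addr0.
  + by rewrite eqxx eq_sym (negbTE nac) eq_sym (negbTE nbc) !add0r.
- move=> i; rewrite !inE /lam3.
  by case: (i == a); case: (i == b); case: (i == c) => //= _; rewrite !addr0.
- by rewrite lam3_sum.
- by rewrite lam3_sumZ.
Qed.

End Pts.

Section Pts2.
Variables (R : realFieldType) (n : nat) (pt : 'I_n -> 'rV[R]_2).

Lemma sq_gt0 (O : R) : O != 0 -> 0 < O * O.
Proof. by move=> h; rewrite lt0r mulf_neq0 //= -expr2 sqr_ge0. Qed.

Lemma orient_eq_neq (a b c : 'I_n) : orient (pt a) (pt b) (pt c) != 0 ->
  [/\ a != b, a != c & b != c].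
Proof.
move=> h; split; apply/eqP => e; move: h; rewrite e /orient; apply/negP;
  rewrite negbK; apply/eqP; ring.
Qed.

Lemma ratio_pos (x O : R) : O != 0 -> 0 < x * O -> 0 < x / O.
Proof.
move=> hO hx; have -> : x / O = (x * O) / (O * O) by field.
by rewrite divr_gt0 // sq_gt0.
Qed.

Lemma ratio_ge0 (x O : R) : O != 0 -> 0 <= x * O -> 0 <= x / O.
Proof.
move=> hO hx; have -> : x / O = (x * O) / (O * O) by field.
by rewrite divr_ge0 // ltW // sq_gt0.
Qed.

Lemma cramer_div (p q w y : 'rV[R]_2) : orient p q w != 0 ->
  y = (orient y q w / orient p q w) *: p + (orient p y w / orient p q w) *: q
      + (orient p q y / orient p q w) *: w.
Proof.
move=> h; apply: vec_eq; rewrite !coE /orient in h *; field; exact: h.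
Qed.

Lemma ratio_sum (p q w y : 'rV[R]_2) : orient p q w != 0 ->
  orient y q w / orient p q w + orient p y w / orient p q w
      + orient p q y / orient p q w = 1.
Proof. move=> h; rewrite /orient in h *; field; exact: h. Qed.

Lemma open_of_orient (a b c : 'I_n) y :
  orient (pt a) (pt b) (pt c) != 0 ->
  0 < orient y (pt b) (pt c) * orient (pt a) (pt b) (pt c) ->
  0 < orient (pt a) y (pt c) * orient (pt a) (pt b) (pt c) ->
  0 < orient (pt a) (pt b) y * orient (pt a) (pt b) (pt c) ->
  in_open_conv pt [set a; b; c] y.
Proof.
move=> hO h1 h2 h3; have [nab nac nbc] := orient_eq_neq hO.
rewrite [y in in_open_conv _ _ y](cramer_div y hO).
apply: in_open_conv3 => //; try exact: ratio_pos.
exact: ratio_sum.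
Qed.

Lemma conv_of_orient (a b c : 'I_n) y :
  orient (pt a) (pt b) (pt c) != 0 ->
  0 <= orient y (pt b) (pt c) * orient (pt a) (pt b) (pt c) ->
  0 <= orient (pt a) y (pt c) * orient (pt a) (pt b) (pt c) ->
  0 <= orient (pt a) (pt b) y * orient (pt a) (pt b) (pt c) ->
  in_conv pt [set a; b; c] y.
Proof.
move=> hO h1 h2 h3.
rewrite [y in in_conv _ _ y](cramer_div y hO).
apply: in_conv3 => //; try exact: ratio_ge0.
exact: ratio_sum.
Qed.

End Pts2.

Section Near.
Variable R : realFieldType.

Lemma pos_aux (s O d a M : R) : 0 < s < 1 -> O != 0 -> 0 < d ->
  d * M <= s * (1 - s) * (O * O) -> `|a| <= M -> 0 < (1-s) * O * O + d * a.
Proof.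
move=> /andP[h1 h2] hO hd hM ha.
have O2 : 0 < O * O by rewrite lt0r mulf_neq0 //= -expr2 sqr_ge0.
have ha' : - `|a| <= a by have := ler_norm (- a); rewrite normrN; lra.
have e1 : d * `|a| <= d * M by rewrite ler_wpM2l // ltW.
have e2 : - (d * `|a|) <= d * a by rewrite -mulrN ler_wpM2l // ltW.
have e3 : 0 < (1-s)*(1-s)*(O*O) by rewrite mulr_gt0 // mulr_gt0 // subr_gt0.
lra.
Qed.

Lemma near (pp qq uu v : 'rV[R]_2) (s : R) :
  orient pp qq uu != 0 -> 0 < s < 1 ->
  0 < orient pp qq (pp + v) * orient pp qq uu ->
  exists2 d0, 0 < d0 & forall d, 0 < d <= d0 ->
   let y := (1 - s) *: pp + s *: qq + d *: v in
   [/\ 0 < orient y qq uu * orient pp qq uu,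
       0 < orient pp y uu * orient pp qq uu &
       0 < orient pp qq y * orient pp qq uu].
Proof.
move=> hO hs hv.
set O := orient pp qq uu.
set A1 := orient (pp + v) qq uu - O.
set B1 := orient pp (pp + v) uu.
set m := s * (1 - s) * (O * O).
set M := 1 + `|A1 * O| + `|B1 * O|.
have Mpos : 0 < M by rewrite /M ltr_wpDr // ltr_wpDr //.
have O2 : 0 < O * O by rewrite lt0r mulf_neq0 //= -expr2 sqr_ge0.
have [s0 s1] := andP hs.
have mpos : 0 < m by rewrite /m mulr_gt0 // mulr_gt0 // subr_gt0.
exists (m / M); first by rewrite divr_gt0.
move=> d /andP [hd0 hd1] y.
have hdM : d * M <= m by rewrite -ler_pdivlMr.
have I1 : orient y qq uu = (1 - s) * O + d * A1.
  by rewrite /y /A1 /O /orient !coE; ring.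
have I2 : orient pp y uu = s * O + d * B1.
  by rewrite /y /B1 /O /orient !coE; ring.
have I3 : orient pp qq y = d * orient pp qq (pp + v).
  by rewrite /y /O /orient !coE; ring.
split.
- rewrite I1 (_ : ((1 - s) * O + d * A1) * O = (1-s)*O*O + d*(A1*O)); last by ring.
  apply: (@pos_aux s O d _ M) => //.
  by have := normr_ge0 (B1 * O); rewrite /M; lra.
- rewrite I2 (_ : (s * O + d * B1) * O = (1 - (1 - s))*O*O + d*(B1*O)); last by ring.
  apply: (@pos_aux (1 - s) O d _ M) => //.
  + by rewrite subr_gt0 s1 /= ltrBlDr ltrDl.
  + by rewrite (_ : (1 - s) * (1 - (1 - s)) * (O * O) = m) // /m; ring.
  + by have := normr_ge0 (A1 * O); rewrite /M; lra.
- by rewrite I3 -mulrA mulr_gt0.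
Qed.

End Near.

Section Tri.
Variables (R : realFieldType) (n : nat) (pt : 'I_n -> 'rV[R]_2).
Hypothesis pt_inj : injective pt.

Local Notation orientI a b c := (orient (pt a) (pt b) (pt c)).

Lemma orient_perms (p q w : 'rV[R]_2) : orient p q w != 0 ->
  [/\ orient q p w != 0, orient p w q != 0, orient q w p != 0,
      orient w p q != 0 & orient w q p != 0].
Proof.
move=> h; split.
- by rewrite (_ : orient q p w = - orient p q w) ?oppr_eq0 // /orient; ring.
- by rewrite (_ : orient p w q = - orient p q w) ?oppr_eq0 // /orient; ring.
- by rewrite (_ : orient q w p = orient p q w) // /orient; ring.
- by rewrite (_ : orient w p q = orient p q w) // /orient; ring.
- by rewrite (_ : orient w q p = - orient p q w) ?oppr_eq0 // /orient; ring.
Qed.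

Lemma set3_id (x y w : 'I_n) : [/\ [set x; y; w] = [set y; x; w],
   [set x; y; w] = [set x; w; y], [set x; y; w] = [set y; w; x],
   [set x; y; w] = [set w; x; y] & [set x; y; w] = [set w; y; x]].
Proof.
by split; apply/setP => i; rewrite !inE; case: (i == x); case: (i == y); case: (i == w).
Qed.

Lemma in_set3P (a x y w : 'I_n) : a \in [set x; y; w] -> [\/ a = x, a = y | a = w].
Proof. by rewrite !inE -orbA => /or3P [/eqP|/eqP|/eqP]; [apply: Or31|apply: Or32|apply: Or33]. Qed.

Lemma in_set2P (a x y : 'I_n) : a \in [set x; y] -> a = x \/ a = y.
Proof. by rewrite !inE => /orP [/eqP|/eqP]; [left|right]. Qed.

Lemma tri_relabel T t a b : triangulation pt T -> t \in T -> a \in t -> b \in t ->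
  a != b -> exists z, t = [set a; b; z] /\ orientI a b z != 0.
Proof.
case=> hnd _ _ _ _ tT ha hb nab.
have [x [y [w [ht ho]]]] := hnd t tT.
have [o1 o2 o3 o4 o5] := orient_perms ho.
have [s1 s2 s3 s4 s5] := set3_id x y w.
subst t.
case/in_set3P: ha => ea; case/in_set3P: hb => eb; subst a b;
  try by rewrite eqxx in nab.
all: first [by exists x; split | by exists y; split | by exists w; split].
Qed.

Lemma tri_orient T a b c : triangulation pt T -> [set a; b; c] \in T ->
  a != b -> c != a -> c != b -> orientI a b c != 0.
Proof.
move=> hT tT nab nca ncb.
have [z [e hz]] := tri_relabel hT tT (a := a) (b := b) ltac:(by rewrite !inE eqxx)
   ltac:(by rewrite !inE eqxx orbT) nab.
have : c \in [set a; b; z] by rewrite -e !inE eqxx !orbT.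
by case/in_set3P => ec; [rewrite ec eqxx in nca|rewrite ec eqxx in ncb|rewrite ec].
Qed.

Definition clean (x y : 'I_n) := x != y /\ forall z, ~ open_seg (pt x) (pt y) (pt z).

Lemma open_seg_sym (p q z : 'rV[R]_2) : open_seg p q z -> open_seg q p z.
Proof.
case=> s [/andP [s0 s1] ->]; exists (1 - s); split.
  by rewrite subr_gt0 s1 /= ltrBlDr ltrDl.
by apply: vec_eq; rewrite !coE; ring.
Qed.

Lemma clean_sym x y : clean x y -> clean y x.
Proof. by case=> h1 h2; split; [rewrite eq_sym|move=> z /open_seg_sym /h2]. Qed.

Lemma pt_eq_of (x y : 'I_n) (s : R) : s != 0 ->
  pt x = (1 - s) *: pt x + s *: pt y -> x = y.
Proof.
move=> hs e; apply: pt_inj; apply: vec_eq.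
- have := congr1 (@xco R) e; rewrite !coE => h; apply: (mulfI hs); lra.
- have := congr1 (@yco R) e; rewrite !coE => h; apply: (mulfI hs); lra.
Qed.

Lemma pt_eq_of2 (x y : 'I_n) (s : R) : 1 - s != 0 ->
  pt y = (1 - s) *: pt x + s *: pt y -> x = y.
Proof.
move=> hs e; apply: pt_inj; apply: vec_eq.
- have := congr1 (@xco R) e; rewrite !coE => h; apply: (mulfI hs); lra.
- have := congr1 (@yco R) e; rewrite !coE => h; apply: (mulfI hs); lra.
Qed.

Lemma tri_clean T x y w : triangulation pt T -> [set x; y; w] \in T ->
  orientI x y w != 0 -> clean x y.
Proof.
move=> hT tT ho; have [nxy nxw nyw] := orient_eq_neq ho.
split => // z [s [/andP [s0 s1] ez]].
have hc : in_conv pt [set x; y; w] (pt z).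
  rewrite ez -[_ + s *: pt y]addr0 -(scale0r (pt w)).
  by apply: in_conv3 => //; lra.
case: hT => _ _ _ _ h5; have := h5 _ _ tT hc.
case/in_set3P => ezz; subst z.
- by have := pt_eq_of (lt0r_neq0 s0) ez => exy; rewrite exy eqxx in nxy.
  have s1' : 1 - s != 0 by rewrite lt0r_neq0 // subr_gt0.
  by have := pt_eq_of2 s1' ez => exy; rewrite exy eqxx in nxy.
- move: ho; rewrite ez /orient !coE; apply/negP; rewrite negbK; apply/eqP; ring.
Qed.

Lemma pair_eq (a b c d : 'I_n) : [set a; b] = [set c; d] ->
  (a = c /\ b = d) \/ (a = d /\ b = c).
Proof.
move=> e.
have ha : a \in [set c; d] by rewrite -e !inE eqxx.
have hb : b \in [set c; d] by rewrite -e !inE eqxx orbT.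
have hc : c \in [set a; b] by rewrite e !inE eqxx.
have hd : d \in [set a; b] by rewrite e !inE eqxx orbT.
case/in_set2P: ha => ea; case/in_set2P: hb => eb; subst a b; auto;
  case/in_set2P: hc => ec; case/in_set2P: hd => ed; subst; auto.
Qed.

Lemma edge_tri T x y : triangulation pt T -> edge_of T [set x; y] -> x != y ->
  exists u, [set x; y; u] \in T /\ orientI x y u != 0.
Proof.
move=> hT [_ [t tT sub]] nxy.
have hx : x \in t by apply: (subsetP sub); rewrite !inE eqxx.
have hy : y \in t by apply: (subsetP sub); rewrite !inE eqxx orbT.
have [z [et hz]] := tri_relabel hT tT hx hy nxy.
by exists z; rewrite -et.
Qed.

Lemma edge_pair (g : {set 'I_n}) : is_edge g -> exists x y, x != y /\ g = [set x; y].
Proof. by rewrite /is_edge => /eqP /cards2P. Qed.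

Lemma edge_clean T x y : triangulation pt T -> edge_of T [set x; y] -> x != y ->
  clean x y.
Proof.
move=> hT he nxy; have [u [uT hu]] := edge_tri hT he nxy.
exact: tri_clean hT uT hu.
Qed.

Lemma same_side_eq T p q u w : triangulation pt T ->
  [set p; q; u] \in T -> [set p; q; w] \in T ->
  0 < orientI p q u * orientI p q w -> [set p; q; u] = [set p; q; w].
Proof.
move=> hT uT wT hpos.
case: (eqVneq [set p; q; u] [set p; q; w]) => // ne.
exfalso; move: hpos.
set O1 := orientI p q u; set O2 := orientI p q w => hpos.
have O1n : O1 != 0 by apply/eqP => e; rewrite e mul0r ltxx in hpos.
have O2n : O2 != 0 by apply/eqP => e; rewrite e mulr0 ltxx in hpos.
set v := (2^-1) *: (pt u + pt w) - 2^-1 *: (pt p + pt q).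
have ev : orient (pt p) (pt q) (pt p + v) = 2^-1 * (O1 + O2).
  by rewrite /v /O1 /O2 /orient !coE; ring.
have hs : 0 < (2^-1 : R) < 1.
  by apply/andP; split; [rewrite invr_gt0 ltr0n | rewrite invf_lt1 // ?ltr0n // ltr1n].
have O1sq := sq_gt0 O1n; have O2sq := sq_gt0 O2n.
have h1 : 0 < orient (pt p) (pt q) (pt p + v) * O1.
  by rewrite ev; have := hs; case/andP => ? _; nra.
have h2 : 0 < orient (pt p) (pt q) (pt p + v) * O2.
  by rewrite ev; have := hs; case/andP => ? _; nra.
have [d1 d1p H1] := near O1n hs h1.
have [d2 d2p H2] := near O2n hs h2.
set d := Num.min d1 d2.
have dp : 0 < d by rewrite lt_min d1p d2p.
set y := (1 - 2^-1) *: pt p + 2^-1 *: pt q + d *: v.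
have [a1 a2 a3] : [/\ 0 < orient y (pt q) (pt u) * O1,
   0 < orient (pt p) y (pt u) * O1 & 0 < orient (pt p) (pt q) y * O1].
  by apply: H1; rewrite dp /= ge_min lexx.
have [b1 b2 b3] : [/\ 0 < orient y (pt q) (pt w) * O2,
   0 < orient (pt p) y (pt w) * O2 & 0 < orient (pt p) (pt q) y * O2].
  by apply: H2; rewrite dp /= ge_min lexx orbT.
have c1 := open_of_orient O1n a1 a2 a3.
have c2 := open_of_orient O2n b1 b2 b3.
by case: hT => _ h2' _ _ _; apply: (h2' _ _ uT wT ne y).
Qed.

End Tri.

Section Real.
Variable R : realFieldType.

Lemma interm (a b c : R) : a < c < b -> exists2 tau, 0 < tau < 1 & (1 - tau) * a + tau * b = c.
Proof.
case/andP=> h1 h2; have hab : a < b by apply: lt_trans h2.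
have bn : b - a != 0 by rewrite lt0r_neq0 // subr_gt0.
exists ((c - a) / (b - a)).
  apply/andP; split; first by rewrite divr_gt0 // subr_gt0.
  by rewrite ltr_pdivrMr ?subr_gt0 // mul1r ltrD2r.
by field.
Qed.

Lemma interm' (a b c : R) : b < c < a -> exists2 tau, 0 < tau < 1 & (1 - tau) * a + tau * b = c.
Proof.
move=> h; have [tau /andP[t0 t1] e] := interm h.
exists (1 - tau); first by apply/andP; split; lra.
by rewrite -e; ring.
Qed.

Lemma real_cases (t a b : R) : 0 < t < 1 -> (a <= 0 \/ 1 <= a) -> (b <= 0 \/ 1 <= b) ->
  0 < (1 - t) * a + t * b < 1 ->
  [\/ a = 0 /\ b = 1, a = 1 /\ b = 0,
      exists2 tau, 0 < tau < 1 & (1 - tau) * a + tau * b = 0 |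
      exists2 tau, 0 < tau < 1 & (1 - tau) * a + tau * b = 1].
Proof.
move=> /andP [t0 t1] ha hb /andP [s0 s1].
case: ha => ha; case: hb => hb.
- exfalso; have : (1 - t) * a <= 0 by apply: mulr_ge0_le0; lra.
  have : t * b <= 0 by apply: mulr_ge0_le0; lra.
  lra.
- case: (ltrgtP a 0) => [an|ap|a0].
  + by apply: Or43; apply: interm; rewrite an /=; lra.
  + by lra.
  + case: (ltrgtP b 1) => [bn|bp|b1].
    * by lra.
    * by apply: Or44; apply: interm; rewrite a0 bp /=; lra.
    * by apply: Or41.
- case: (ltrgtP b 0) => [bn|bp|b0].
  + by apply: Or43; apply: interm'; rewrite bn /=; lra.
  + by lra.
  + case: (ltrgtP a 1) => [an|ap|a1].
    * by lra.
    * by apply: Or44; apply: interm'; rewrite b0 ap /=; lra.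
    * by apply: Or42.
- exfalso; have : (1 - t) * (a - 1) >= 0 by apply: mulr_ge0; lra.
  have : t * (b - 1) >= 0 by apply: mulr_ge0; lra.
  lra.
Qed.

End Real.

Section Col.
Variable R : realFieldType.
Implicit Types (p q z c d : 'rV[R]_2).

Definition dotp z p q := (xco z - xco p) * (xco q - xco p) + (yco z - yco p) * (yco q - yco p).
Definition len2 p q := (xco q - xco p) ^+ 2 + (yco q - yco p) ^+ 2.
Definition mu p q z := dotp z p q / len2 p q.

Lemma len2_neq0 p q : p != q -> len2 p q != 0.
Proof.
move=> npq; apply/eqP => e; move/eqP: npq; apply.
have ha := sqr_ge0 (xco q - xco p); have hb := sqr_ge0 (yco q - yco p).
rewrite /len2 in e.
have e1 : (xco q - xco p) ^+ 2 = 0 by lra.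
have e2 : (yco q - yco p) ^+ 2 = 0 by lra.
move/eqP: e1; rewrite sqrf_eq0 subr_eq0 => /eqP e1.
move/eqP: e2; rewrite sqrf_eq0 subr_eq0 => /eqP e2.
by apply: vec_eq.
Qed.

Lemma colpar p q z : p != q -> orient p q z = 0 -> z = (1 - mu p q z) *: p + mu p q z *: q.
Proof.
move=> npq ho; have Ln := len2_neq0 npq.
apply: vec_eq; rewrite !coE /mu.
- have h1 : (xco z - xco p) * len2 p q = dotp z p q * (xco q - xco p).
    apply/eqP; rewrite -subr_eq0; apply/eqP.
    transitivity (- (yco q - yco p) * orient p q z); last by rewrite ho mulr0.
    by rewrite /len2 /dotp /orient; ring.
  transitivity (xco p + ((xco z - xco p) * len2 p q) / len2 p q); first by field.
  by rewrite h1; field.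
- have h1 : (yco z - yco p) * len2 p q = dotp z p q * (yco q - yco p).
    apply/eqP; rewrite -subr_eq0; apply/eqP.
    transitivity ((xco q - xco p) * orient p q z); last by rewrite ho mulr0.
    by rewrite /len2 /dotp /orient; ring.
  transitivity (yco p + ((yco z - yco p) * len2 p q) / len2 p q); first by field.
  by rewrite h1; field.
Qed.

Lemma mu_seg p q s : p != q -> mu p q ((1 - s) *: p + s *: q) = s.
Proof.
move=> npq; have Ln := len2_neq0 npq; move: Ln.
rewrite /mu /dotp /len2 !coE => Ln; field; exact: Ln.
Qed.

Lemma mu_aff p q c d t : mu p q ((1 - t) *: c + t *: d) = (1 - t) * mu p q c + t * mu p q d.
Proof. by rewrite /mu /dotp !coE; ring. Qed.

Lemma comb_col p q (a b tau : R) :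
  (1 - tau) * a + tau * b = 0 ->
  (1 - tau) *: ((1 - a) *: p + a *: q) + tau *: ((1 - b) *: p + b *: q) = p.
Proof.
move=> h; apply: vec_eq; rewrite !coE.
- transitivity (xco p + ((1 - tau) * a + tau * b) * (xco q - xco p)); first by ring.
  by rewrite h mul0r addr0.
- transitivity (yco p + ((1 - tau) * a + tau * b) * (yco q - yco p)); first by ring.
  by rewrite h mul0r addr0.
Qed.

Lemma comb_col1 p q (a b tau : R) :
  (1 - tau) * a + tau * b = 1 ->
  (1 - tau) *: ((1 - a) *: p + a *: q) + tau *: ((1 - b) *: p + b *: q) = q.
Proof.
move=> h; apply: vec_eq; rewrite !coE.
- transitivity (xco p + ((1 - tau) * a + tau * b) * (xco q - xco p)); first by ring.
  by rewrite h mul1r addrC subrK.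
- transitivity (yco p + ((1 - tau) * a + tau * b) * (yco q - yco p)); first by ring.
  by rewrite h mul1r addrC subrK.
Qed.

End Col.

Section Main.
Variables (R : realFieldType) (n : nat) (pt : 'I_n -> 'rV[R]_2).
Hypothesis pt_inj : injective pt.
Local Notation orientI a b c := (orient (pt a) (pt b) (pt c)).
Local Notation clean := (clean pt).

Lemma pt_neq (x y : 'I_n) : x != y -> pt x != pt y.
Proof. by apply: contra => /eqP /pt_inj ->. Qed.

Lemma collinear_eq x y c d X : clean x y -> clean c d ->
  open_seg (pt x) (pt y) X -> open_seg (pt c) (pt d) X ->
  orientI x y c = 0 -> orientI x y d = 0 -> [set x; y] = [set c; d].
Proof.
move=> [nxy cxy] [ncd ccd] [s [hs eX]] [t [ht eX']] oc od.
have npq := pt_neq nxy.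
have ec := colpar npq oc; have ed := colpar npq od.
set mc := mu (pt x) (pt y) (pt c) in ec; set md := mu (pt x) (pt y) (pt d) in ed.
have e1 : mu (pt x) (pt y) X = s by rewrite eX mu_seg.
have e2 : mu (pt x) (pt y) X = (1 - t) * mc + t * md by rewrite eX' mu_aff.
have out z (m : R) : pt z = (1 - m) *: pt x + m *: pt y -> m <= 0 \/ 1 <= m.
  move=> ez; case: (lerP m 0) => hm; first by left.
  case: (lerP 1 m) => hm'; first by right.
  by exfalso; apply: (cxy z); exists m; rewrite hm hm'.
have [h1|h2|[tau ht1 et]|[tau ht1 et]] :=
  real_cases ht (out _ _ ec) (out _ _ ed) ltac:(by rewrite -e2 e1).
- case: h1 => m0 m1; rewrite m0 m1 ?subr0 ?subrr ?scale0r ?scale1r ?addr0 ?add0r in ec ed.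
  by rewrite (pt_inj ec) (pt_inj ed).
- case: h2 => m0 m1; rewrite m0 m1 ?subr0 ?subrr ?scale0r ?scale1r ?addr0 ?add0r in ec ed.
  by rewrite (pt_inj ec) (pt_inj ed) setUC.
- exfalso; apply: (ccd x); exists tau; split => //.
  by rewrite ec ed comb_col.
- exfalso; apply: (ccd y); exists tau; split => //.
  by rewrite ec ed comb_col1.
Qed.


Lemma cross_half x y c d X : clean x y -> clean c d ->
  open_seg (pt x) (pt y) X -> open_seg (pt c) (pt d) X -> [set x; y] != [set c; d] ->
  orientI x y c * orientI x y d < 0.
Proof.
move=> cl1 cl2 sg1 sg2 ne.
have [s [/andP[s0 s1] eX]] := sg1; have [t [/andP [t0 t1] eX']] := sg2.
have h0 : orient (pt x) (pt y) X = 0 by rewrite eX /orient !coE; ring.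
have h1 : orient (pt x) (pt y) X = (1 - t) * orientI x y c + t * orientI x y d.
  by rewrite eX' /orient !coE; ring.
rewrite h0 in h1.
case: (ltrP (orientI x y c * orientI x y d) 0) => // hp.
exfalso; move/eqP: ne; apply.
have e1 : orientI x y c = 0.
  set o1 := orientI x y c in h1 hp *; set o2 := orientI x y d in h1 hp *.
  have ee : (1 - t) * (o1 * o1) = - (t * (o1 * o2)).
    transitivity (o1 * ((1 - t) * o1 + t * o2) - t * (o1 * o2)); first by ring.
    by rewrite -h1 mulr0 sub0r.
  have : 0 <= t * (o1 * o2) by rewrite mulr_ge0 // ltW.
  rewrite -oppr_le0 -ee pmulr_rle0 ?subr_gt0 //.
  by move=> h; apply/eqP; rewrite -sqrf_eq0 expr2 eq_le h /= -expr2 sqr_ge0.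
have e2 : orientI x y d = 0.
  by move: h1; rewrite e1 mulr0 add0r => /esym /eqP; rewrite mulf_eq0 (gt_eqF t0) => /eqP.
exact: collinear_eq cl1 cl2 sg1 sg2 e1 e2.
Qed.

Lemma cross_trans x y c d X : clean x y -> clean c d ->
  open_seg (pt x) (pt y) X -> open_seg (pt c) (pt d) X -> [set x; y] != [set c; d] ->
  orientI x y c * orientI x y d < 0 /\ orientI c d x * orientI c d y < 0.
Proof.
move=> cl1 cl2 sg1 sg2 ne; split; first exact: cross_half cl1 cl2 sg1 sg2 ne.
by apply: cross_half cl2 cl1 sg2 sg1 _; rewrite eq_sym.
Qed.


Lemma no_cross T g1 g2 : triangulation pt T -> edge_of T g1 -> edge_of T g2 ->
  crosses pt g1 g2 -> False.
Proof.
move=> hT e1 e2 [ne [x [y [c [d [nxy ncd eg1 eg2 [X [sg1 sg2]]]]]]]].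
subst g1 g2.
have [u [uT O1n]] := edge_tri hT e1 nxy.
have [w [wT O2n]] := edge_tri hT e2 ncd.
have cl1 := tri_clean pt_inj hT uT O1n; have cl2 := tri_clean pt_inj hT wT O2n.
have [tr1 tr2] := cross_trans cl1 cl2 sg1 sg2 ne.
case: (eqVneq [set x; y; u] [set c; d; w]) => [et|nt].
  have z1 : orientI x y x = 0 by rewrite /orient; ring.
  have z2 : orientI x y y = 0 by rewrite /orient; ring.
  have hc : c \in [set x; y; u] by rewrite et !inE eqxx.
  have hd : d \in [set x; y; u] by rewrite et !inE eqxx orbT.
  case/in_set3P: hc => ec; case/in_set3P: hd => ed; subst c d;
    rewrite ?z1 ?z2 ?mul0r ?mulr0 ?ltxx // in tr1.
  by rewrite eqxx in ncd.
set O1 := orientI x y u in O1n *; set O2 := orientI c d w in O2n *.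
set K := orientI x y d - orientI x y c.
have Kn : K != 0.
  apply/eqP => K0; move: tr1; have -> : orientI x y d = orientI x y c.
    by apply/eqP; rewrite -subr_eq0 -/K K0.
  by rewrite ltNge -expr2 sqr_ge0.
set v := (O1 * K) *: (pt d - pt c) - (O2 * K) *: (pt y - pt x).
have hv1 : 0 < orient (pt x) (pt y) (pt x + v) * O1.
  have -> : orient (pt x) (pt y) (pt x + v) * O1 = (O1 * K) * (O1 * K).
    by rewrite /v /K /orient !coE; ring.
  by rewrite sq_gt0 // mulf_neq0.
have hv2 : 0 < orient (pt c) (pt d) (pt c + v) * O2.
  have -> : orient (pt c) (pt d) (pt c + v) * O2 = (O2 * K) * (O2 * K).
    by rewrite /v /K /orient !coE; ring.
  by rewrite sq_gt0 // mulf_neq0.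
have [s [hs eX]] := sg1; have [t [ht eX']] := sg2.
have [d1 d1p H1] := near O1n hs hv1.
have [d2 d2p H2] := near O2n ht hv2.
set dd := Num.min d1 d2.
have dp : 0 < dd by rewrite lt_min d1p d2p.
have [a1 a2 a3] := H1 dd ltac:(by rewrite dp /= ge_min lexx).
have [b1 b2 b3] := H2 dd ltac:(by rewrite dp /= ge_min lexx orbT).
have c1 := open_of_orient O1n a1 a2 a3.
have c2 := open_of_orient O2n b1 b2 b3.
rewrite -eX' eX in c2.
by case: hT => _ h2' _ _ _; apply: (h2' _ _ uT wT nt _ (conj c1 c2)).
Qed.


Lemma frac_in (p q : R) : p * q < 0 -> 0 < p / (p - q) < 1.
Proof.
move=> h.
have nq : p - q != 0 by apply/eqP => e; move: h; rewrite (_ : p = q); [rewrite ltNge -expr2 sqr_ge0 | apply/eqP; rewrite -subr_eq0 e].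
have D := sq_gt0 nq.
rewrite (_ : p / (p - q) = (p * (p - q)) / ((p - q) * (p - q))); last by field.
apply/andP; split.
  by rewrite divr_gt0 //; nra.
by rewrite ltr_pdivrMr // mul1r; nra.
Qed.

Lemma diag_cross (a b c d : 'I_n) : a != b -> c != d ->
  orientI a b c * orientI a b d < 0 -> orientI c d a * orientI c d b < 0 ->
  exists X, open_seg (pt a) (pt b) X /\ open_seg (pt c) (pt d) X.
Proof.
move=> nab ncd h1 h2.
have n1 : orientI c d a - orientI c d b != 0.
  apply/eqP => e; move: h2; rewrite (_ : orientI c d a = orientI c d b).
    by rewrite ltNge -expr2 sqr_ge0.
  by apply/eqP; rewrite -subr_eq0 e.
have n2 : orientI a b c - orientI a b d != 0.
  apply/eqP => e; move: h1; rewrite (_ : orientI a b c = orientI a b d).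
    by rewrite ltNge -expr2 sqr_ge0.
  by apply/eqP; rewrite -subr_eq0 e.
set s := orientI c d a / (orientI c d a - orientI c d b).
set t := orientI a b c / (orientI a b c - orientI a b d).
exists ((1 - s) *: pt a + s *: pt b); split.
  by exists s; split => //; apply: frac_in.
exists t; split; first by apply: frac_in.
rewrite /s /t; rewrite /orient in n1 n2.
by apply: vec_eq; rewrite !coE /orient; field; rewrite n1 n2.
Qed.

End Main.

Section Real2.
Variable R : realFieldType.

Lemma root_lin (b0 b1 : R) : 0 < b0 -> b1 < 0 ->
  exists2 th, 0 < th < 1 & (1 - th) * b0 + th * b1 = 0.
Proof.
move=> h0 h1; have [th hth e] := @interm' R b0 b1 0 ltac:(by rewrite h0 h1).
by exists th.
Qed.

Lemma exit_real (b0 b1 g0 g1 : R) : 0 < b0 -> 0 < g0 -> b1 < 0 \/ g1 < 0 ->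
  exists2 th, 0 < th < 1 &
   [/\ 0 <= (1 - th) * b0 + th * b1, 0 <= (1 - th) * g0 + th * g1 &
       (1 - th) * b0 + th * b1 = 0 \/ (1 - th) * g0 + th * g1 = 0].
Proof.
move=> hb hg hc.
have case_g : g1 < 0 -> (b1 < 0 -> forall thb, 0 < thb < 1 -> (1 - thb) * b0 + thb * b1 = 0 ->
     (1 - thb) * g0 + thb * g1 < 0) -> exists2 th, 0 < th < 1 &
   [/\ 0 <= (1 - th) * b0 + th * b1, 0 <= (1 - th) * g0 + th * g1 &
       (1 - th) * b0 + th * b1 = 0 \/ (1 - th) * g0 + th * g1 = 0].
  move=> g1n hyp; have [thg /andP [t0 t1] eg] := root_lin hg g1n.
  exists thg; first by rewrite t0 t1.
  split; [|by rewrite eg|by right].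
  case: (lerP 0 b1) => hb1.
    have : 0 <= thg * b1 by apply: mulr_ge0; lra.
    have : 0 <= (1 - thg) * b0 by apply: mulr_ge0; lra.
    lra.
  have [thb /andP [s0 s1] eb] := root_lin hb hb1.
  have := hyp hb1 thb ltac:(by rewrite s0 s1) eb => gneg.
  have h1 : (thb - thg) * (g1 - g0) < 0.
    have -> : (thb - thg) * (g1 - g0) = ((1 - thb) * g0 + thb * g1) - ((1 - thg) * g0 + thg * g1) by ring.
    by rewrite eg subr0.
  have h2 : 0 < thb - thg.
    case: (ltrP 0 (thb - thg)) => // hh; exfalso.
    have : 0 <= (thb - thg) * (g1 - g0) by apply: mulr_le0; lra.
    lra.
  have -> : (1 - thg) * b0 + thg * b1 = ((1 - thg) * b0 + thg * b1) - ((1 - thb) * b0 + thb * b1) by rewrite eb subr0.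
  have -> : ((1 - thg) * b0 + thg * b1) - ((1 - thb) * b0 + thb * b1) = (thb - thg) * (b0 - b1) by ring.
  by apply: mulr_ge0; lra.
case: (ltrP b1 0) => hb1.
  have [thb /andP [s0 s1] eb] := root_lin hb hb1.
  case: (lerP 0 ((1 - thb) * g0 + thb * g1)) => hgb.
    by exists thb; [rewrite s0 s1|split; [rewrite eb|done|left]].
  apply: case_g.
    case: (ltrP g1 0) => // hg1; exfalso.
    have : 0 <= thb * g1 by apply: mulr_ge0; lra.
    have : 0 <= (1 - thb) * g0 by apply: mulr_ge0; lra.
    lra.
  move=> _ th' /andP [u0 u1] eb'.
  suff -> : th' = thb by [].
  have : (th' - thb) * (b1 - b0) = 0.
    transitivity (((1 - th') * b0 + th' * b1) - ((1 - thb) * b0 + thb * b1)); first by ring.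
    by rewrite eb eb' subrr.
  have nb : b1 - b0 != 0 by apply: ltr0_neq0; lra.
  by move/eqP; rewrite mulf_eq0 (negbTE nb) orbF subr_eq0 => /eqP.
case: hc => [hb1'|hg1]; first by lra.
by apply: case_g => // h; lra.
Qed.

End Real2.

Section Exit.
Variables (R : realFieldType) (n : nat) (pt : 'I_n -> 'rV[R]_2).
Hypothesis pt_inj : injective pt.
Local Notation orientI a b c := (orient (pt a) (pt b) (pt c)).
Local Notation clean := (clean pt).

Lemma exit_tri T a c d x y X : triangulation pt T -> [set a; c; d] \in T ->
  orientI a c d != 0 -> clean x y ->
  open_seg (pt x) (pt y) X -> open_seg (pt c) (pt d) X ->
  0 < orientI c d x * orientI c d a ->
  [\/ x = a, exists Z, open_seg (pt a) (pt c) Z /\ open_seg (pt x) (pt y) Z |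
             exists Z, open_seg (pt a) (pt d) Z /\ open_seg (pt x) (pt y) Z].
Proof.
move=> hT aT On [nxy cxy] [sg [/andP [sg0 sg1] eX1]] [ta [/andP [ta0 ta1] eX2]] hside.
have ex := cramer_div (pt x) On.
have hs := ratio_sum (pt x) On.
move: ex hs.
set O := orientI a c d.
set La := orient (pt x) (pt c) (pt d) / O.
set Lc := orient (pt a) (pt x) (pt d) / O.
set Ld := orient (pt a) (pt c) (pt x) / O => ex hs.
have Lapos : 0 < La.
  apply: ratio_pos => //.
  have -> : orient (pt x) (pt c) (pt d) * O = orientI c d x * orientI c d a.
    by rewrite /O /orient; ring.
  done.
case: (eqVneq x a) => [xa|xna]; first by apply: Or31.
have hneg : Lc < 0 \/ Ld < 0.
  case: (ltrP Lc 0) => hc; first by left.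
  case: (ltrP Ld 0) => hd; first by right.
  exfalso.
  have hc3 : in_conv pt [set a; c; d] (pt x) by rewrite ex; apply: in_conv3 => //; exact: ltW.
  case: hT => _ _ _ _ h5; case/in_set3P: (h5 _ _ aT hc3) => ex'.
  - by rewrite ex' eqxx in xna.
  - by move: hside; rewrite ex' (_ : orientI c d c = 0) ?mul0r ?ltxx // /orient; ring.
  - by move: hside; rewrite ex' (_ : orientI c d d = 0) ?mul0r ?ltxx // /orient; ring.
have [th /andP [th0 th1] [hb hg hz]] := @exit_real R (1 - ta) Lc ta Ld
   ltac:(by rewrite subr_gt0) ta0 hneg.
set bt := (1 - th) * (1 - ta) + th * Lc in hb hz.
set gm := (1 - th) * ta + th * Ld in hg hz.
have hsum : th * La + bt + gm = 1.
  transitivity (th * (La + Lc + Ld) + (1 - th)); first by rewrite /bt /gm; ring.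
  by rewrite hs; ring.
have eZ : (1 - th) *: X + th *: pt x = (th * La) *: pt a + bt *: pt c + gm *: pt d.
  rewrite {1}eX2; move: ex; move: (pt x) => px ->.
  by apply: vec_eq; rewrite /bt /gm !coE; ring.
have eZ' : (1 - th) *: X + th *: pt x =
    (1 - (1 - th) * sg) *: pt x + ((1 - th) * sg) *: pt y.
  by rewrite eX1; apply: vec_eq; rewrite !coE; ring.
have segZ : open_seg (pt x) (pt y) ((1 - th) *: X + th *: pt x).
  exists ((1 - th) * sg); split => //.
  apply/andP; split; first by rewrite mulr_gt0 // subr_gt0.
  have : (1 - th) * sg <= sg by nra.
  by move=> h; apply: le_lt_trans h sg1.
have thLa : 0 < th * La by rewrite mulr_gt0.
case: hz => hz0.
-
  case: (ltrP 0 gm) => gpos.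
  + apply: Or33; exists ((1 - th) *: X + th *: pt x); split => //.
    exists gm; split; first by apply/andP; split => //; lra.
    rewrite eZ hz0 scale0r addr0; congr (_ *: _ + _); lra.
  + exfalso; have g0 : gm = 0 by lra.
    apply: (cxy a); move: segZ; rewrite eZ hz0 g0 !scale0r !addr0.
    by rewrite (_ : th * La = 1) ?scale1r //; lra.
- case: (ltrP 0 bt) => bpos.
  + apply: Or32; exists ((1 - th) *: X + th *: pt x); split => //.
    exists bt; split; first by apply/andP; split => //; lra.
    rewrite eZ hz0 scale0r addr0; congr (_ *: _ + _); lra.
  + exfalso; have b0 : bt = 0 by lra.
    apply: (cxy a); move: segZ; rewrite eZ hz0 b0 !scale0r !addr0.
    by rewrite (_ : th * La = 1) ?scale1r //; lra.
Qed.

End Exit.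

Section Flip.
Variables (R : realFieldType) (n : nat) (pt : 'I_n -> 'rV[R]_2).
Hypothesis pt_inj : injective pt.
Local Notation orientI a b c := (orient (pt a) (pt b) (pt c)).

Record fdata (T T' : {set {set 'I_n}}) (e e' : {set 'I_n}) (a b c d : 'I_n) : Prop := FD {
 fd_ab : a != b; fd_ac : a != c; fd_ad : a != d; fd_bc : b != c; fd_bd : b != d; fd_cd : c != d;
 fd_e : e = [set a; b]; fd_e' : e' = [set c; d];
 fd_abc : [set a; b; c] \in T; fd_abd : [set a; b; d] \in T;
 fd_acd : [set a; c; d] \in T'; fd_bcd : [set b; c; d] \in T';
 fd_T' : forall t, t \in T' ->
   [\/ [/\ t \in T, t != [set a; b; c] & t != [set a; b; d]], t = [set a; c; d] | t = [set b; c; d]];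
 fd_keep : forall t, t \in T -> t != [set a; b; c] -> t != [set a; b; d] -> t \in T';
 fd_s1 : orientI a b c * orientI a b d < 0;
 fd_s2 : orientI c d a * orientI c d b < 0;
 fd_o1 : orientI a c d != 0; fd_o2 : orientI b c d != 0 }.

Lemma sign_neg (p q : R) : p != 0 -> q != 0 -> ~ 0 < p * q -> p * q < 0.
Proof.
move=> hp hq h; case: (ltrP (p * q) 0) => // h'.
exfalso; apply: h; rewrite lt0r h' andbT mulf_neq0 //.
Qed.

Lemma flip_fd T e e' T' : triangulation pt T -> triangulation pt T' ->
  flip_step pt T e e' T' -> exists a b c d, fdata T T' e e' a b c d.
Proof.
move=> hT hT' [a [b [c [d [hu ee /andP [abc abd] [_ ee'] eT']]]]].
move: hu; rewrite /= !inE !negb_or => /and4P [/and3P [ab ac ad] /andP [bc bd] cd _].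
exists a, b, c, d.
have acd : [set a; c; d] \in T' by rewrite eT' !inE eqxx !orbT.
have bcd : [set b; c; d] \in T' by rewrite eT' !inE eqxx !orbT.
have [s1 s2 s3 s4 s5] := set3_id a c d.
have [r1 r2 r3 r4 r5] := set3_id b c d.
have o1 : orientI a c d != 0 by apply: (tri_orient hT' acd) => //; rewrite eq_sym.
have o2 : orientI b c d != 0 by apply: (tri_orient hT' bcd) => //; rewrite eq_sym.
constructor => //.
- move=> t; rewrite eT' !inE => /or3P [/and3P [h1 h2 h3]|/eqP ->|/eqP ->].
  + by apply: Or31.
  + by apply: Or32.
  + by apply: Or33.
- by move=> t tT h1 h2; rewrite eT' !inE h1 h2 tT.
- have oc : orientI a b c != 0 by apply: (tri_orient hT abc) => //; rewrite eq_sym.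
  have od : orientI a b d != 0 by apply: (tri_orient hT abd) => //; rewrite eq_sym.
  apply: sign_neg => // hp.
  have := same_side_eq hT abc abd hp => e1.
  have : d \in [set a; b; c] by rewrite e1 !inE eqxx !orbT.
  by case/in_set3P => ed; [rewrite ed eqxx in ad|rewrite ed eqxx in bd|rewrite ed eqxx in cd].
- have cda : [set c; d; a] \in T' by rewrite -s3.
  have cdb : [set c; d; b] \in T' by rewrite -r3.
  have oa : orientI c d a != 0 by apply: (tri_orient hT' cda) => //; rewrite eq_sym.
  have ob : orientI c d b != 0 by apply: (tri_orient hT' cdb) => //; rewrite eq_sym.
  apply: sign_neg => // hp.
  have := same_side_eq hT' cda cdb hp => e1.
  have : b \in [set c; d; a] by rewrite e1 !inE eqxx !orbT.
  by case/in_set3P => ed; [rewrite ed eqxx in bc|rewrite ed eqxx in bd|rewrite ed eqxx in ab].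
Qed.


Lemma sub_pair3 (g : {set 'I_n}) x y z : is_edge g -> g \subset [set x; y; z] ->
  [\/ g = [set x; y], g = [set x; z] | g = [set y; z]].
Proof.
move=> /edge_pair [p [q [npq ->]]] sub.
have hp : p \in [set x; y; z] by apply: (subsetP sub); rewrite !inE eqxx.
have hq : q \in [set x; y; z] by apply: (subsetP sub); rewrite !inE eqxx orbT.
case/in_set3P: hp => ep; case/in_set3P: hq => eq; subst p q;
  rewrite ?eqxx // in npq;
  first [by apply: Or31 | by apply: Or32 | by apply: Or33 |
         by apply: Or31; rewrite setUC | by apply: Or32; rewrite setUC |
         by apply: Or33; rewrite setUC].
Qed.

Lemma edge_sub (T : {set {set 'I_n}}) (t : {set 'I_n}) x y : t \in T -> x \in t -> y \in t -> x != y ->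
  edge_of T [set x; y].
Proof.
move=> tT hx hy nxy; split; first by rewrite /is_edge cards2 nxy.
by exists t => //; apply/subsetP => z; rewrite !inE => /orP [/eqP ->|/eqP ->].
Qed.

Lemma fd_E1 T T' e e' a b c d g : fdata T T' e e' a b c d -> edge_of T' g ->
  edge_of T g \/ g = e'.
Proof.
move=> fd [ge [t tT' sub]].
case: (fd_T' fd tT') => [[tT _ _]|et|et]; first by left; split => //; exists t.
- subst t; case: (sub_pair3 ge sub) => ->.
  + by left; apply: (edge_sub (fd_abc fd)); rewrite ?inE ?eqxx ?orbT // (fd_ac fd).
  + by left; apply: (edge_sub (fd_abd fd)); rewrite ?inE ?eqxx ?orbT // (fd_ad fd).
  + by right; rewrite (fd_e' fd).
- subst t; case: (sub_pair3 ge sub) => ->.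
  + by left; apply: (edge_sub (fd_abc fd)); rewrite ?inE ?eqxx ?orbT // (fd_bc fd).
  + by left; apply: (edge_sub (fd_abd fd)); rewrite ?inE ?eqxx ?orbT // (fd_bd fd).
  + by right; rewrite (fd_e' fd).
Qed.

Lemma fd_E2 T T' e e' a b c d : triangulation pt T -> fdata T T' e e' a b c d ->
  ~ edge_of T' e.
Proof.
move=> hT fd [_ [t tT' sub]]; rewrite (fd_e fd) in sub.
have ha : a \in t by apply: (subsetP sub); rewrite !inE eqxx.
have hb : b \in t by apply: (subsetP sub); rewrite !inE eqxx orbT.
case: (fd_T' fd tT') => [[tT n1 n2]|et|et]; try subst t.
- have [z [et hz]] := tri_relabel hT tT ha hb (fd_ab fd).
  have oc : orientI a b c != 0 by have := fd_s1 fd; apply: contraTneq => ->; rewrite mul0r ltxx.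
  have od : orientI a b d != 0 by have := fd_s1 fd; apply: contraTneq => ->; rewrite mulr0 ltxx.
  have s1 := fd_s1 fd.
  have zT : [set a; b; z] \in T by rewrite -et.
  case: (ltrP 0 (orientI a b c * orientI a b z)) => h1.
    by move/eqP: n1; apply; rewrite et; symmetry; exact: (same_side_eq hT (fd_abc fd) zT h1).
  case: (ltrP 0 (orientI a b d * orientI a b z)) => h2.
    by move/eqP: n2; apply; rewrite et; symmetry; exact: (same_side_eq hT (fd_abd fd) zT h2).
  exfalso.
  have : 0 <= (orientI a b c * orientI a b z) * (orientI a b d * orientI a b z).
    by apply: mulr_le0.
  rewrite (_ : _ * _ = (orientI a b c * orientI a b d) * (orientI a b z * orientI a b z)); last by ring.
  by rewrite pmulr_lge0 ?sq_gt0 // leNgt s1.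
- by case/in_set3P: hb => eb; move: (fd_ab fd) (fd_bc fd) (fd_bd fd); rewrite eb eqxx.
- by case/in_set3P: ha => ea; move: (fd_ab fd) (fd_ac fd) (fd_ad fd); rewrite ea eqxx.
Qed.

End Flip.

From mathcomp Require Import zify.
From Stdlib Require Import Classical.

Lemma sign2 (R : realFieldType) (p q r s : R) : p * q < 0 -> r * s < 0 ->
  (0 < p * r /\ 0 < q * s) \/ (0 < p * s /\ 0 < q * r).
Proof.
move=> h1 h2.
have e : (p * r) * (q * s) = (p * q) * (r * s) by ring.
have e' : (p * s) * (q * r) = (p * q) * (r * s) by ring.
have P : 0 < (p * q) * (r * s) by rewrite nmulr_rgt0.
case: (ltrP 0 (p * r)) => h3.
  left; split => //; rewrite -e in P; by rewrite -(pmulr_rgt0 _ h3).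
right.
have hpr : p * r < 0.
  rewrite lt_neqAle h3 andbT mulf_neq0 //.
    by apply/eqP => p0; move: h1; rewrite p0 mul0r ltxx.
  by apply/eqP => r0; move: h2; rewrite r0 mul0r ltxx.
have e2 : (p * r) * (p * s) = (p * p) * (r * s) by ring.
have p0 : p != 0 by apply/eqP => p0; move: h1; rewrite p0 mul0r ltxx.
have pp : 0 < p * p by rewrite lt0r mulf_neq0 //= -expr2 sqr_ge0.
have hps : 0 < p * s.
  have : (p * r) * (p * s) < 0 by rewrite e2 pmulr_rlt0.
  by rewrite nmulr_rlt0.
split => //; rewrite -e' in P; by rewrite -(pmulr_rgt0 _ hps).
Qed.

Section Run.
Variables (R : realFieldType) (n : nat) (pt : 'I_n -> 'rV[R]_2).
Hypothesis pt_inj : injective pt.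
Variables (Ti : {set {set 'I_n}}) (k : nat) (eps phi : nat -> {set 'I_n})
  (Ts : nat -> {set {set 'I_n}}).
Hypothesis run : valid_run pt Ti k eps phi Ts.
Local Notation orientI a b c := (orient (pt a) (pt b) (pt c)).
Local Notation dpath := (dpath k eps phi Ts).
Local Notation adj := (adj k eps phi Ts).

Lemma runT j : (j <= k)%N -> triangulation pt (Ts j).
Proof. by case: run => _ h _; apply: h. Qed.

Lemma runF j : (1 <= j <= k)%N -> exists a b c d, fdata pt (Ts j.-1) (Ts j) (eps j) (phi j) a b c d.
Proof.
move=> hj; case: run => _ hT hF.
have /andP [j1 jk] := hj.
apply: flip_fd; [apply: hT; exact: leq_trans (leq_pred j) jk | exact: hT | exact: hF].
Qed.

Lemma runE2 j : (1 <= j <= k)%N -> ~ edge_of (Ts j) (eps j).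
Proof.
move=> hj; have [a [b [c [d fd]]]] := runF hj.
have /andP [j1 jk] := hj.
by apply: (fd_E2 (runT (leq_trans (leq_pred j) jk)) fd).
Qed.

Lemma runE1 j g : (1 <= j <= k)%N -> edge_of (Ts j) g -> edge_of (Ts j.-1) g \/ g = phi j.
Proof. by move=> hj; have [a [b [c [d fd]]]] := runF hj; apply: fd_E1 fd. Qed.

Lemma runEps j : (1 <= j <= k)%N -> edge_of (Ts j.-1) (eps j).
Proof.
move=> hj; have [a [b [c [d fd]]]] := runF hj.
rewrite (fd_e fd); apply: (edge_sub (fd_abc fd)); rewrite ?inE ?eqxx ?orbT //; exact: fd_ab fd.
Qed.

Lemma runPhi j : (1 <= j <= k)%N -> edge_of (Ts j) (phi j).
Proof.
move=> hj; have [a [b [c [d fd]]]] := runF hj.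
rewrite (fd_e' fd); apply: (edge_sub (fd_acd fd)); rewrite ?inE ?eqxx ?orbT //; exact: fd_cd fd.
Qed.

Lemma LC i j g : (i <= j <= k)%N -> edge_of (Ts j) g -> ~ edge_of (Ts i) g ->
  exists q, [/\ (i < q <= j)%N, phi q = g & forall p, (q < p <= j)%N -> eps p <> g].
Proof.
elim: j => [|j IH] /andP [ij jk] hg hn.
  by move: ij; rewrite leqn0 => /eqP ei; subst i.
case: (eqVneq i j.+1) => [ei|nij]; first by subst i.
have ij' : (i <= j)%N by rewrite -ltnS ltn_neqAle nij ij.
have hj : (1 <= j.+1 <= k)%N by rewrite jk.
have neps : eps j.+1 <> g by move=> e; apply: (runE2 hj); rewrite e.
case: (runE1 hj hg) => /= [hg'|eg].
  have [q [/andP [q1 q2] eq hp]] := IH (ltac:(by rewrite ij' ltnW)) hg' hn.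
  exists q; split => //; first by rewrite q1 ltnW.
  move=> p /andP [p1 p2]; case: (eqVneq p j.+1) => [->|npj] //.
  by apply: hp; rewrite p1 -ltnS ltn_neqAle npj p2.
exists j.+1; split => //; first by rewrite leqnn ltnS ij'.
by move=> p /andP [p1 p2]; exfalso; move: (leq_trans p1 p2); rewrite ltnn.
Qed.


Lemma crosses_of (u w x y : 'I_n) Z : u != w -> x != y -> [set u; w] != [set x; y] ->
  open_seg (pt u) (pt w) Z -> open_seg (pt x) (pt y) Z -> crosses pt [set u; w] [set x; y].
Proof. by move=> h1 h2 h3 s1 s2; split => //; exists u, w, x, y; split => //; exists Z. Qed.

Definition created i m g := exists q, [/\ (i <= q <= m)%N, phi q = g,
   (forall p, (q < p <= m)%N -> eps p <> g) & (q = i \/ dpath i q)].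
Definition Sp i m := forall g, edge_of (Ts m) g -> crosses pt g (eps i) -> created i m g.

Lemma dpath_ext i q h : (q = i \/ dpath i q) -> adj q h -> dpath i h.
Proof.
case=> [->|hp] ha; first exact: t_step.
exact: t_trans hp (t_step _ _ _ _ ha).
Qed.

Lemma created_adj i m g h : (1 <= i)%N -> (m < h <= k)%N -> created i m g ->
  (g = eps h \/ share_tri (Ts h.-1) g (eps h)) -> (h.-1 <= m)%N -> dpath i h.
Proof.
move=> i1 /andP [mh hk] [q [/andP [iq qm] pq hp hpath]] hs hm.
apply: (dpath_ext hpath); split.
- exact: leq_trans i1 iq.
- exact: leq_ltn_trans qm mh.
- exact: hk.
- by rewrite pq.
- move=> p /andP [p1 p2]; rewrite pq; apply: hp; rewrite p1 /=.
  by apply: leq_trans hm; rewrite -ltnS (ltn_predK p2).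
Qed.

Lemma Case2_of_S i h : (1 <= i)%N -> (i < h <= k)%N -> Sp i h.-1 -> phi h = eps i ->
  dpath i h.
Proof.
move=> i1 /andP [ih hk] hS ep.
have hj : (1 <= h <= k)%N by rewrite hk (leq_trans i1 (ltnW ih)).
have [a [b [c [d fd]]]] := runF hj.
have [X [sX1 sX2]] := diag_cross (fd_ab fd) (fd_cd fd) (fd_s1 fd) (fd_s2 fd).
have hc : crosses pt (eps h) (eps i).
  rewrite -ep (fd_e fd) (fd_e' fd); apply: crosses_of sX1 sX2.
  - exact: fd_ab fd.
  - exact: fd_cd fd.
  - apply/negP => /eqP e; have : c \in [set a; b] by rewrite e !inE eqxx.
    by case/in_set2P => ec; [move: (fd_ac fd)|move: (fd_bc fd)]; rewrite ec eqxx.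
have [q [/andP [iq qm] pq hp hpath]] := hS _ (runEps hj) hc.
apply: (@created_adj i h.-1 (eps h) h) => //.
- by rewrite prednK ?leqnn ?hk // (leq_trans i1 (ltnW ih)).
- by exists q; split => //; rewrite iq.
- by left.
Qed.


Lemma share_of (T : {set {set 'I_n}}) (t : {set 'I_n}) u w u' w' : t \in T ->
  u \in t -> w \in t -> u' \in t -> w' \in t -> u != w -> u' != w' ->
  [set u; w] != [set u'; w'] -> share_tri T [set u; w] [set u'; w'].
Proof.
move=> tT h1 h2 h3 h4 n1 n2 n3; split => //; try by rewrite /is_edge cards2 ?n1 ?n2.
exists t => //; apply/andP; split; apply/subsetP => z; rewrite !inE => /orP [/eqP->|/eqP->] //.
Qed.

Lemma Step i m : (1 <= i <= m)%N -> (m < k)%N -> Sp i m ->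
  (forall q, (i < q <= m)%N -> phi q = eps i -> dpath i q) ->
  crosses pt (phi m.+1) (eps i) -> dpath i m.+1.
Proof.
move=> /andP [i1 im] mk hS hC2 [ne [c' [d' [x [y [nc nxy e1 e2 [X [s1 s2]]]]]]]].
have hj : (1 <= m.+1 <= k)%N by rewrite mk.
have [a [b [c [d fd]]]] := runF hj.
have sX : open_seg (pt c) (pt d) X.
  have e1' : [set c; d] = [set c'; d'] by rewrite -(fd_e' fd).
  case: (pair_eq pt_inj e1') => [[ec ed]|[ec ed]]; rewrite ec ed //.
  exact: open_seg_sym.
have ik : (i <= k)%N by rewrite (leq_trans im (ltnW mk)).
have hi : (1 <= i <= k)%N by rewrite i1 ik.
have clxy : clean pt x y.
  apply: (edge_clean pt_inj (runT (leq_trans (leq_pred i) ik))) nxy.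
  by rewrite -e2; apply: runEps.
have clcd : clean pt c d.
  apply: (edge_clean pt_inj (runT mk)) (fd_cd fd).
  by rewrite -(fd_e' fd); apply: runPhi.
have nexy : [set x; y] != [set c; d].
  by rewrite eq_sym -(fd_e' fd) -e2.
have [_ tr] := cross_trans pt_inj clxy clcd s2 sX nexy.
have notxy (g : {set 'I_n}) : c \in g \/ d \in g -> g != [set x; y].
  move=> hcd; apply/negP => /eqP eg; rewrite eg in hcd.
  have z1 : orientI c d c = 0 by rewrite /orient; ring.
  have z2 : orientI c d d = 0 by rewrite /orient; ring.
  by case: hcd => /in_set2P [] e; move: tr; rewrite -e ?z1 ?z2 ?mul0r ?mulr0 ltxx.
have Tm : triangulation pt (Ts m) by apply: runT; exact: ltnW.
have eab : eps m.+1 = [set a; b] := fd_e fd.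
have via (u w : 'I_n) : u \in [set a; b; c] /\ w \in [set a; b; c] \/
                        u \in [set a; b; d] /\ w \in [set a; b; d] ->
    u != w -> [set u; w] != [set a; b] -> c \in [set u; w] \/ d \in [set u; w] ->
    (exists Z, open_seg (pt u) (pt w) Z /\ open_seg (pt x) (pt y) Z) -> dpath i m.+1.
  move=> hin nuw nab hcd [Z [z1 z2]].
  have hsh : share_tri (Ts m) [set u; w] (eps m.+1).
    rewrite eab; case: hin => [[hu hw]|[hu hw]].
    - apply: (share_of (fd_abc fd)) => //; rewrite ?inE ?eqxx ?orbT //; exact: fd_ab fd.
    - apply: (share_of (fd_abd fd)) => //; rewrite ?inE ?eqxx ?orbT //; exact: fd_ab fd.
  have he : edge_of (Ts m) [set u; w].
    by case: hsh => h1 _ _ [t tT /andP [sub _]]; split => //; exists t.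
  have hcr : crosses pt [set u; w] (eps i).
    by rewrite e2; apply: crosses_of z1 z2 => //; apply: notxy.
  apply: (@created_adj i m [set u; w]) => //.
  - by rewrite ltnSn mk.
  - exact: hS.
  - by right.
have case3 : eps i = eps m.+1 -> dpath i m.+1.
  move=> ee.
  have hnot : ~ edge_of (Ts i) (eps i) by apply: runE2.
  have hed : edge_of (Ts m) (eps i) by rewrite ee; apply: runEps.
  have imk : (i <= m <= k)%N by rewrite im ltnW.
  have [q [/andP [iq qm] pq hp]] := LC imk hed hnot.
  have iqm : (i < q <= m)%N by rewrite iq qm.
  have dq := hC2 q iqm pq.
  apply: (@created_adj i m (eps i)) => //.
  - by rewrite ltnSn mk.
  - by exists q; split => //; [rewrite ltnW|right].
  - by left.
have inabc (z : 'I_n) : z \in [set a; b; c] -> z \in [set a; b; c] := id.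
have [[px pb]|[px pb]] := sign2 (proj2 (cross_trans pt_inj clxy clcd s2 sX nexy)) (fd_s2 fd).
- have ex := exit_tri (runT mk) (fd_acd fd) (fd_o1 fd) clxy s2 sX px.
  have ey := exit_tri (runT mk) (fd_bcd fd) (fd_o2 fd) (clean_sym clxy)
               (open_seg_sym s2) sX pb.
  case: ex => [xa|hz|hz].
  + case: ey => [yb|[Z [z1 z2]]|[Z [z1 z2]]].
    * by apply: case3; rewrite e2 eab xa yb.
    * apply: (via b c) => //.
      - by left; rewrite !inE !eqxx !orbT.
      - exact: fd_bc fd.
      - by apply/negP => /eqP /(pair_eq pt_inj) [[_ ec]|[_ ec]]; [move: (fd_bc fd)|move: (fd_ac fd)]; rewrite ec eqxx.
      - by left; rewrite !inE eqxx orbT.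
      - by exists Z; split => //; apply: open_seg_sym.
    * apply: (via b d) => //.
      - by right; rewrite !inE !eqxx !orbT.
      - exact: fd_bd fd.
      - by apply/negP => /eqP /(pair_eq pt_inj) [[_ ec]|[_ ec]]; [move: (fd_bd fd)|move: (fd_ad fd)]; rewrite ec eqxx.
      - by right; rewrite !inE eqxx orbT.
      - by exists Z; split => //; apply: open_seg_sym.
  + apply: (via a c) => //.
    - by left; rewrite !inE !eqxx !orbT.
    - exact: fd_ac fd.
    - by apply/negP => /eqP /(pair_eq pt_inj) [[_ ec]|[_ ec]]; [move: (fd_bc fd)|move: (fd_ac fd)]; rewrite ec eqxx.
    - by left; rewrite !inE eqxx orbT.
  + apply: (via a d) => //.
    - by right; rewrite !inE !eqxx !orbT.
    - exact: fd_ad fd.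
    - by apply/negP => /eqP /(pair_eq pt_inj) [[_ ec]|[_ ec]]; [move: (fd_bd fd)|move: (fd_ad fd)]; rewrite ec eqxx.
    - by right; rewrite !inE eqxx orbT.
- have ex := exit_tri (runT mk) (fd_bcd fd) (fd_o2 fd) clxy s2 sX px.
  have ey := exit_tri (runT mk) (fd_acd fd) (fd_o1 fd) (clean_sym clxy)
               (open_seg_sym s2) sX pb.
  case: ex => [xb|hz|hz].
  + case: ey => [ya|[Z [z1 z2]]|[Z [z1 z2]]].
    * by apply: case3; rewrite e2 eab xb ya setUC.
    * apply: (via a c) => //.
      - by left; rewrite !inE !eqxx !orbT.
      - exact: fd_ac fd.
      - by apply/negP => /eqP /(pair_eq pt_inj) [[_ ec]|[_ ec]]; [move: (fd_bc fd)|move: (fd_ac fd)]; rewrite ec eqxx.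
      - by left; rewrite !inE eqxx orbT.
      - by exists Z; split => //; apply: open_seg_sym.
    * apply: (via a d) => //.
      - by right; rewrite !inE !eqxx !orbT.
      - exact: fd_ad fd.
      - by apply/negP => /eqP /(pair_eq pt_inj) [[_ ec]|[_ ec]]; [move: (fd_bd fd)|move: (fd_ad fd)]; rewrite ec eqxx.
      - by right; rewrite !inE eqxx orbT.
      - by exists Z; split => //; apply: open_seg_sym.
  + apply: (via b c) => //.
    - by left; rewrite !inE !eqxx !orbT.
    - exact: fd_bc fd.
    - by apply/negP => /eqP /(pair_eq pt_inj) [[_ ec]|[_ ec]]; [move: (fd_bc fd)|move: (fd_ac fd)]; rewrite ec eqxx.
    - by left; rewrite !inE eqxx orbT.
  + apply: (via b d) => //.
    - by right; rewrite !inE !eqxx !orbT.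
    - exact: fd_bd fd.
    - by apply/negP => /eqP /(pair_eq pt_inj) [[_ ec]|[_ ec]]; [move: (fd_bd fd)|move: (fd_ad fd)]; rewrite ec eqxx.
    - by right; rewrite !inE eqxx orbT.
Qed.


Lemma S_all i : (1 <= i <= k)%N -> forall m, (i <= m <= k)%N -> Sp i m.
Proof.
move=> /andP [i1 ik]; elim/ltn_ind => m IH /andP [im mk].
case: (eqVneq m i) => [em|nmi].
  subst m => g hg hc.
  have hi : (1 <= i <= k)%N by rewrite i1 ik.
  case: (runE1 hi hg) => [hg'|eg].
    have hk' : (i.-1 <= k)%N by lia.
    exfalso; apply: (no_cross pt_inj (runT hk') hg' (runEps hi) hc).
  exists i; split => //; first by rewrite leqnn.
  + by move=> p hp; exfalso; lia.
  + by left.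
have : (i < m)%N by lia.
case: m IH im mk nmi => [//|m] IH im mk nmi im' g hg hc.
have hj : (1 <= m.+1 <= k)%N by lia.
have hSm : Sp i m by apply: IH; lia.
have neps : eps m.+1 <> g by move=> e; apply: (runE2 hj); rewrite e.
case: (runE1 hj hg) => /= [hg'|eg].
  have [q [hq pq hp hpath]] := hSm g hg' hc.
  exists q; split => //; first by lia.
  move=> p hp'; case: (eqVneq p m.+1) => [->|npm] //.
  by apply: hp; lia.
exists m.+1; split => //; first by lia.
  by move=> p hp; exfalso; lia.
right; apply: (Step (m := m)) => //; first by lia.
- move=> q hq pq; apply: Case2_of_S => //; first by lia.
  by apply: IH; lia.
- by rewrite -eg.
Qed.

Lemma Case2 i h : (1 <= i)%N -> (i < h <= k)%N -> phi h = eps i -> dpath i h.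
Proof.
move=> i1 hh ep; apply: Case2_of_S => //.
by apply: (S_all (i := i)); lia.
Qed.

Lemma Case3 i h : (1 <= i)%N -> (i < h <= k)%N -> eps i = eps h -> dpath i h.
Proof.
move=> i1 hh ee.
have h1 : (1 <= h <= k)%N by lia.
have hi : (1 <= i <= k)%N by lia.
have hnot : ~ edge_of (Ts i) (eps i) by apply: runE2.
have hed : edge_of (Ts h.-1) (eps i) by rewrite ee; apply: runEps.
have ihk : (i <= h.-1 <= k)%N by lia.
have [q [hq pq hp]] := LC ihk hed hnot.
have dq : dpath i q by apply: Case2 => //; lia.
apply: (@created_adj i h.-1 (eps i)) => //.
- by lia.
- by exists q; split => //; [lia|right].
- by left.
Qed.

Lemma Case1 i h : (1 <= i)%N -> (i < h <= k)%N -> crosses pt (phi h) (eps i) -> dpath i h.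
Proof.
move=> i1 hh hc.
have e : h = h.-1.+1 by lia.
rewrite e in hc *.
apply: (Step (m := h.-1)) => //.
- by lia.
- by lia.
- by apply: S_all; lia.
- by move=> q hq pq; apply: Case2 => //; lia.
Qed.

Lemma dp_trans a b c : dpath a b -> dpath b c -> dpath a c.
Proof. move=> h1 h2; exact: (t_trans _ _ _ _ _ h1 h2). Qed.

Lemma dp_step a b : adj a b -> dpath a b.
Proof. move=> h; exact: (t_step _ _ _ _ h). Qed.

Lemma adj_mk i j : (1 <= i)%N -> (i <= j)%N -> (j < k)%N ->
  (phi i = eps j.+1 \/ share_tri (Ts j) (phi i) (eps j.+1)) ->
  (forall p, (i < p <= j)%N -> eps p <> phi i) -> adj i j.+1.
Proof.
move=> i1 ij jk hs hp; have ij1 : (i < j.+1)%N by lia.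
by split => // p hp'; apply: hp; lia.
Qed.

Lemma neq_pair (g1 g2 : {set 'I_n}) z : z \in g1 -> z \notin g2 -> g1 != g2.
Proof. by move=> h1 h2; apply/negP => /eqP e; move: h2; rewrite -e h1. Qed.

Lemma first_flip i j g : (exists p, (i < p <= j)%N /\ eps p = g) ->
  exists p, [/\ (i < p <= j)%N, eps p = g & forall p', (i < p' < p)%N -> eps p' <> g].
Proof.
move=> [p0 [h0 e0]].
have hex : exists p, (fun p => (i < p <= j)%N && (eps p == g)) p.
  by exists p0; rewrite h0 e0 eqxx.
case: (ex_minnP hex) => p /andP [hp /eqP ep] hmin.
exists p; split => // p' hp' ep'.
have := hmin p'; rewrite ep' eqxx andbT.
have -> : (i < p' <= j)%N by lia.
move=> /(_ isT); lia.
Qed.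

Lemma Case4a i h : (1 <= i)%N -> (i < h <= k)%N -> phi i = eps h -> dpath i h.
Proof.
move=> i1 hh ep.
case: (classic (exists p, (i < p <= h.-1)%N /\ eps p = phi i)) => [hex|hno].
  have [p [hp e hmin]] := first_flip hex.
  have hp0 : (p.-1.+1 = p)%N by lia.
  have a1 : adj i p.
    rewrite -hp0; apply: adj_mk => //; try lia.
    + by left; rewrite hp0.
    + by move=> p' hp'; apply: hmin; lia.
  apply: t_trans (t_step _ _ _ _ a1) _.
  by apply: Case3; [lia|lia|rewrite e ep].
apply: t_step.
have e : h = h.-1.+1 by lia.
rewrite e; apply: adj_mk => //; try lia.
+ by left; rewrite -e.
+ by move=> p hp ep'; apply: hno; exists p.
Qed.

Lemma Qlem d i j h : (h - i)%N = d -> (1 <= i)%N -> (i <= j)%N -> (j < h)%N -> (h <= k)%N ->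
  share_tri (Ts j) (phi i) (eps h) -> dpath i h.
Proof.
elim/ltn_ind: d i j h => d IHd i j h hd i1.
suff H : forall e j, (h - j)%N = e -> (i <= j)%N -> (j < h)%N -> (h <= k)%N ->
    share_tri (Ts j) (phi i) (eps h) -> dpath i h.
  by move=> ij jh hk hs; apply: (H _ j erefl).
elim => [|e IHe] {}j he ij jh hk hs; first by exfalso; lia.
case: (classic (exists p, (i < p <= j)%N /\ eps p = phi i)) => [hex|hno].
  have [p0 [hp0 e0 hmin]] := first_flip hex.
  have a1 : adj i p0.
    have hq : (p0.-1.+1 = p0)%N by lia.
    rewrite -hq; apply: adj_mk => //; try lia.
    + by left; rewrite hq.
    + by move=> p' hp'; apply: hmin; lia.
  have hp0k : (1 <= p0 <= k)%N by lia.
  have hnot : ~ edge_of (Ts p0) (phi i) by rewrite -e0; apply: runE2.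
  have hedg : edge_of (Ts j) (phi i).
    by case: hs => ge _ _ [t tT /andP [s1 _]]; split => //; exists t.
  have hpj : (p0 <= j <= k)%N by lia.
  have [q [hq pq _]] := LC hpj hedg hnot.
  have d2 : dpath p0 q by apply: Case2; [lia|lia|rewrite pq e0].
  have d3 : dpath q h.
    apply: (IHd (h - q)%N _ q j h) => //; try lia.
    by rewrite pq.
  exact: dp_trans (dp_step a1) (dp_trans d2 d3).
case: (eqVneq j.+1 h) => [ejh|njh].
  apply: t_step; rewrite -ejh; apply: adj_mk => //; try lia.
  + by right; rewrite ejh.
  + by move=> p hp ep; apply: hno; exists p.
have jk : (j < k)%N by lia.
have hj : (1 <= j.+1 <= k)%N by lia.
have [a [b [c [d' fd]]]] := runF hj.
have adjj : (phi i = eps j.+1 \/ share_tri (Ts j) (phi i) (eps j.+1)) -> adj i j.+1.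
  move=> hs'; apply: adj_mk => //.
  by move=> p hp ep; apply: hno; exists p.
case: (hs) => ge fe gf [t tT /andP [gt ft]].
have eab : eps j.+1 = [set a; b] := fd_e fd.
have outer : share_tri (Ts j.+1) (phi j.+1) (eps h) -> dpath j.+1 h.
  move=> hs2; apply: (IHd (h - j.+1)%N _ j.+1 j.+1 h) => //; lia.
have jh1 : (1 <= j.+1)%N by [].
have he' : (h - j.+1)%N = e by lia.
have ij1 : (i <= j.+1)%N by lia.
have jh' : (j.+1 < h)%N by lia.
have jh2 : (j.+1 < h <= k)%N by lia.
have H (w w' : 'I_n) : t = [set a; b; w] -> [set a; w; w'] \in Ts j.+1 ->
    [set b; w; w'] \in Ts j.+1 -> phi j.+1 = [set w; w'] ->
    [/\ a != w, a != w', b != w, b != w' & w != w'] -> dpath i h.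
  move=> et aT bT ep [aw aw' bw bw' ww'].
  have nab := fd_ab fd.
  have gsub : phi i \subset [set a; b; w] by rewrite -et.
  have fsub : eps h \subset [set a; b; w] by rewrite -et.
  have shjf (f0 : {set 'I_n}) : f0 = [set a; w] \/ f0 = [set b; w] ->
      share_tri (Ts j.+1) (phi j.+1) f0.
    case => ->; rewrite ep.
    - apply: (share_of aT); rewrite ?inE ?eqxx ?orbT //.
      by rewrite eq_sym; apply: (neq_pair (z := a)); rewrite !inE ?eqxx ?(negbTE aw) ?(negbTE aw').
    - apply: (share_of bT); rewrite ?inE ?eqxx ?orbT //.
      by rewrite eq_sym; apply: (neq_pair (z := b)); rewrite !inE ?eqxx ?(negbTE bw) ?(negbTE bw').
  have adj_share : phi i != [set a; b] -> dpath i j.+1.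
    move=> nab'; apply: dp_step; apply: adjj; right; rewrite eab.
    split => //; first by rewrite /is_edge cards2 nab.
    exists t => //; rewrite gt /= et; apply/subsetP => z; rewrite !inE => /orP [->|->];
      by rewrite ?orbT.
  have wab : w \notin [set a; b] by rewrite !inE negb_or eq_sym aw eq_sym bw.
  case: (sub_pair3 ge gsub) => eg.
  - have a1 : adj i j.+1 by apply: adjj; left; rewrite eg eab.
    apply: dp_trans (dp_step a1) (outer _); apply: shjf.
    case: (sub_pair3 fe fsub) => ef; [|by left|by right].
    by exfalso; move/eqP: gf; apply; rewrite eg ef.
  - have d1 : dpath i j.+1.
      by apply: adj_share; rewrite eg; apply: (neq_pair (z := w)) => //; rewrite !inE eqxx orbT.
    case: (sub_pair3 fe fsub) => ef.
    + by apply: dp_trans d1 (Case3 jh1 jh2 _); rewrite eab ef.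
    + by apply: dp_trans d1 (outer _); apply: shjf; left.
    + by apply: dp_trans d1 (outer _); apply: shjf; right.
  - have d1 : dpath i j.+1.
      by apply: adj_share; rewrite eg; apply: (neq_pair (z := w)) => //; rewrite !inE eqxx orbT.
    case: (sub_pair3 fe fsub) => ef.
    + by apply: dp_trans d1 (Case3 jh1 jh2 _); rewrite eab ef.
    + by apply: dp_trans d1 (outer _); apply: shjf; left.
    + by apply: dp_trans d1 (outer _); apply: shjf; right.
have dist : [/\ a != c, a != d', b != c, b != d' & c != d'].
  by split; [exact: fd_ac fd|exact: fd_ad fd|exact: fd_bc fd|exact: fd_bd fd|exact: fd_cd fd].
have [tab1|tab1] := boolP (t == [set a; b; c]); last first.
  have [tab2|tab2] := boolP (t == [set a; b; d']); last first.
    have tT' : t \in Ts j.+1 := fd_keep fd tT tab1 tab2.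
    apply: (IHe j.+1 he' ij1 jh' hk).
    by split => //; exists t => //; rewrite gt ft.
  have [s1 s2 s3 s4 s5] := set3_id a c d'.
  have [r1 r2 r3 r4 r5] := set3_id b c d'.
  case: dist => h1 h2 h3 h4 h5.
  apply: (H d' c); rewrite ?(eqP tab2) // -?s2 -?r2 ?(fd_acd fd) ?(fd_bcd fd) //.
  - by rewrite (fd_e' fd) setUC.
  - by split => //; rewrite eq_sym.
case: dist => h1 h2 h3 h4 h5.
apply: (H c d'); rewrite ?(eqP tab1) ?(fd_acd fd) ?(fd_bcd fd) //.
exact: fd_e' fd.
Qed.

End Run.

Unset Implicit Arguments.
Local Close Scope ring_scope.

Theorem lemma7 (R : realFieldType) (n : nat) (pt : 'I_n -> 'rV[R]_2)
    (pt_inj : injective pt)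
    (Ti Tf : {set {set 'I_n}}) (k : nat) (eps phi : nat -> {set 'I_n})
    (Ts : nat -> {set {set 'I_n}}) (C : nat -> Prop) (i h : nat) :
  normalized_solution pt Ti Tf k eps phi Ts ->
  is_component k eps phi Ts C -> C i -> C h -> (i < h)%N ->
  (crosses pt (phi h) (eps i) \/
   phi h = eps i \/
   eps i = eps h \/
   (phi i = eps h \/
    exists j, (i <= j < h)%N /\ share_tri (Ts j) (phi i) (eps h))) ->
  dpath k eps phi Ts i h.
Proof.
move=> [[run _ _] _ _] [j0 [_ hC]] Ci Ch ih cases.
have /hC [/andP [i1 ik] _] := Ci.
have /hC [/andP [h1 hk] _] := Ch.
have hh : (i < h <= k)%N by rewrite ih hk.
case: cases => [c1|[c2|[c3|[c4|[j [hj hs]]]]]].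
- exact: (Case1 pt_inj run i1 hh c1).
- exact: (Case2 pt_inj run i1 hh c2).
- exact: (Case3 pt_inj run i1 hh c3).
- exact: (Case4a pt_inj run i1 hh c4).
- have /andP [ij jh] := hj.
  exact: (Qlem pt_inj run (erefl (h - i)%N) i1 ij jh hk hs).
Qed.
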